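(* Let $T$ be a $2\times3\times2$ quaternion tensor, i.e. $T=(A;B;C)$ with $A,B,C\in M_2(\mathbb{H})$. Then $\mathrm{rank}(T)\le3$.
   Context: $\mathbb{H}$ denotes the real quaternions. An $n_1\times n_2\times n_3$ quaternion tensor is an array $T=(T_{ijk})$ with entries in $\mathbb{H}$, $1\le i\le n_1$, $1\le j\le n_2$, $1\le k\le n_3$; it is written $T=(A_1;\dots;A_{n_2})$ where the frontal slice $A_j$ is the $n_1\times n_3$ matrix $(T_{ijk})_{i,k}$. A nonzero tensor is simple if $T_{ijk}=a_ib_jc_k$ (quaternion product in this order) for some $\vec a\in\mathbb{H}^{n_1},\vec b\in\mathbb{H}^{n_2},\vec c\in\mathbb{H}^{n_3}$. The rank of $T$ is the least number of simple tensors summing to $T$ (the zero tensor has rank $0$). *)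

(* Defs.v *)
From mathcomp Require Import all_boot all_order all_algebra.
From mathcomp Require Import reals.
Set Implicit Arguments. Unset Strict Implicit. Unset Printing Implicit Defensive.
Import GRing.Theory Num.Theory.
Local Open Scope ring_scope.

(* Real quaternions H = { q0 + q1 i + q2 j + q3 k : qi in R }, R : realType (the reals). *)
Record quat (R : realType) := Quat { q0 : R; q1 : R; q2 : R; q3 : R }.

Section Quat.
Variable R : realType.

Definition qzero : quat R := Quat 0 0 0 0.
Definition qadd (x y : quat R) : quat R :=
  Quat (q0 x + q0 y) (q1 x + q1 y) (q2 x + q2 y) (q3 x + q3 y).
(* Hamilton product: i^2 = j^2 = k^2 = ijk = -1 *)
Definition qmul (x y : quat R) : quat R :=
  Quat (q0 x * q0 y - q1 x * q1 y - q2 x * q2 y - q3 x * q3 y)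
       (q0 x * q1 y + q1 x * q0 y + q2 x * q3 y - q3 x * q2 y)
       (q0 x * q2 y - q1 x * q3 y + q2 x * q0 y + q3 x * q1 y)
       (q0 x * q3 y + q1 x * q2 y - q2 x * q1 y + q3 x * q0 y).

Definition qtensor (n1 n2 n3 : nat) := 'I_n1 -> 'I_n2 -> 'I_n3 -> quat R.

Definition tzero n1 n2 n3 : qtensor n1 n2 n3 := fun _ _ _ => qzero.
Definition tadd n1 n2 n3 (S T : qtensor n1 n2 n3) : qtensor n1 n2 n3 :=
  fun i j k => qadd (S i j k) (T i j k).

Definition outer3 n1 n2 n3 (a : 'I_n1 -> quat R) (b : 'I_n2 -> quat R)
  (c : 'I_n3 -> quat R) : qtensor n1 n2 n3 :=
  fun i j k => qmul (qmul (a i) (b j)) (c k).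

Definition simple_tensor n1 n2 n3 (T : qtensor n1 n2 n3) : Prop :=
  T <> @tzero n1 n2 n3 /\
  exists a b c, T = @outer3 n1 n2 n3 a b c.

(* rank T <= r  iff  T is a sum of at most r simple tensors
   (the empty sum is the zero tensor, of rank 0). Since the rank is the
   least such number, this is exactly "rank(T) <= r". *)
Definition qtensor_rank_le n1 n2 n3 (T : qtensor n1 n2 n3) (r : nat) : Prop :=
  exists m : nat, (m <= r)%N /\
  exists S : 'I_m -> qtensor n1 n2 n3,
    (forall l, simple_tensor (S l)) /\
    T = foldr (fun l acc => @tadd n1 n2 n3 (S l) acc) (@tzero n1 n2 n3) (enum 'I_m).

End Quat.

(* Main.v *)
Require Import Defs.
From HB Require Import structures.
From Stdlib Require Import Classical_Prop FunctionalExtensionality.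
From mathcomp Require Import all_boot all_order all_algebra.
From mathcomp Require Import reals.
From mathcomp Require Import ring lra.
Set Implicit Arguments. Unset Strict Implicit. Unset Printing Implicit Defensive.
Import GRing.Theory Num.Theory.
Local Open Scope ring_scope.

Section QuatStruct.
Variable R : realType.
Local Notation H := (quat R).

Definition q2t (x : H) := (q0 x, q1 x, q2 x, q3 x).
Definition t2q (t : R * R * R * R) : H := let: (a, b, c, d) := t in Quat a b c d.
Lemma q2tK : cancel q2t t2q. Proof. by case. Qed.
HB.instance Definition _ := Equality.copy H (can_type q2tK).
HB.instance Definition _ := Choice.copy H (can_type q2tK).

Definition qopp (x : H) : H := Quat (- q0 x) (- q1 x) (- q2 x) (- q3 x).

Lemma quat_eq (x y : H) : q0 x = q0 y -> q1 x = q1 y -> q2 x = q2 y -> q3 x = q3 y -> x = y.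
Proof. by case: x => a b c d; case: y => a' b' c' d' /= -> -> -> ->. Qed.

Ltac qeq := apply: quat_eq => /=; ring.

Lemma qaddA : associative (@qadd R). Proof. by move=> x y z; qeq. Qed.
Lemma qaddC : commutative (@qadd R). Proof. by move=> x y; qeq. Qed.
Lemma qadd0 : left_id (@qzero R) (@qadd R). Proof. by move=> x; qeq. Qed.
Lemma qaddN : left_inverse (@qzero R) qopp (@qadd R). Proof. by move=> x; qeq. Qed.

HB.instance Definition _ := GRing.isZmodule.Build H qaddA qaddC qadd0 qaddN.

Definition qone : H := Quat 1 0 0 0.
Lemma qmulA : associative (@qmul R). Proof. by move=> x y z; qeq. Qed.
Lemma qmul1 : left_id qone (@qmul R). Proof. by move=> x; qeq. Qed.
Lemma qmulr1 : right_id qone (@qmul R). Proof. by move=> x; qeq. Qed.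
Lemma qmulDl : left_distributive (@qmul R) +%R. Proof. by move=> x y z; qeq. Qed.
Lemma qmulDr : right_distributive (@qmul R) +%R. Proof. by move=> x y z; qeq. Qed.
Lemma qone_neq0 : qone != 0.
Proof. apply/eqP => /(congr1 (@q0 R)) /=; exact/eqP/oner_neq0. Qed.

HB.instance Definition _ := GRing.Zmodule_isNzRing.Build H qmulA qmul1 qmulr1 qmulDl qmulDr qone_neq0.

Definition qscale (r : R) (x : H) : H := Quat (r * q0 x) (r * q1 x) (r * q2 x) (r * q3 x).
Lemma qscaleA a b v : qscale a (qscale b v) = qscale (a * b) v. Proof. qeq. Qed.
Lemma qscale1 : left_id 1 qscale. Proof. by move=> x; qeq. Qed.
Lemma qscaleDr : right_distributive qscale +%R. Proof. by move=> a x y; qeq. Qed.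
Lemma qscaleDl v : {morph qscale^~ v: a b / a + b}. Proof. by move=> a b; qeq. Qed.
HB.instance Definition _ := GRing.Zmodule_isLmodule.Build R H qscaleA qscale1 qscaleDr qscaleDl.
Lemma qscaleAl (a : R) (u v : H) : a *: (u * v) = (a *: u) * v. Proof. qeq. Qed.
HB.instance Definition _ := GRing.Lmodule_isLalgebra.Build R H qscaleAl.

Lemma addqE (x y : H) : x + y = qadd x y. Proof. by []. Qed.
Lemma mulqE (x y : H) : x * y = qmul x y. Proof. by []. Qed.
Lemma zeroqE : (0 : H) = qzero R. Proof. by []. Qed.

End QuatStruct.

Section QuatUnit.
Variable R : realType.
Local Notation H := (quat R).

Ltac qeq := apply: quat_eq => /=; ring.

Definition qconj (x : H) : H := Quat (q0 x) (- q1 x) (- q2 x) (- q3 x).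
Definition qnorm (x : H) : R := q0 x ^+ 2 + q1 x ^+ 2 + q2 x ^+ 2 + q3 x ^+ 2.
Definition qinv (x : H) : H := (qnorm x)^-1 *: qconj x.

Lemma qnorm_eq0 (x : H) : qnorm x = 0 -> x = 0.
Proof.
case: x => a b c d; rewrite /qnorm /= => h.
have sa := sqr_ge0 a; have sb := sqr_ge0 b; have sc := sqr_ge0 c; have sd := sqr_ge0 d.
have ha : a ^+ 2 = 0 by lra.
have hb : b ^+ 2 = 0 by lra.
have hc : c ^+ 2 = 0 by lra.
have hd : d ^+ 2 = 0 by lra.
by apply: quat_eq => /=; apply/eqP; rewrite -sqrf_eq0; apply/eqP.
Qed.

Lemma qnorm_neq0 (x : H) : x != 0 -> qnorm x != 0.
Proof. by apply: contra => /eqP /qnorm_eq0 ->. Qed.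

Lemma qmulVq (x : H) : x != 0 -> qinv x * x = 1.
Proof.
move=> /qnorm_neq0; case: x => a b c d; rewrite /qnorm /= => hn.
apply: quat_eq => /=; rewrite /qnorm /=; field; exact: hn.
Qed.

Lemma qmulqV (x : H) : x != 0 -> x * qinv x = 1.
Proof.
move=> /qnorm_neq0; case: x => a b c d; rewrite /qnorm /= => hn.
apply: quat_eq => /=; rewrite /qnorm /=; field; exact: hn.
Qed.

Definition qunit := fun x : H => x != 0.
Definition qinv' (x : H) := if x != 0 then qinv x else x.

Lemma qmulVr : {in qunit, left_inverse 1 qinv' *%R}.
Proof. by move=> x ux; rewrite /qinv' ifT // qmulVq. Qed.
Lemma qdivrr : {in qunit, right_inverse 1 qinv' *%R}.
Proof. by move=> x ux; rewrite /qinv' ifT // qmulqV. Qed.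
Lemma qunitrP : forall x y : H, y * x = 1 /\ x * y = 1 -> qunit x.
Proof.
move=> x y [h _]; apply/eqP => x0; move: h; rewrite x0 mulr0 => /eqP.
by rewrite eq_sym oner_eq0.
Qed.
Lemma qinv_out : {in [predC qunit], qinv' =1 id}.
Proof. move=> x; rewrite inE /qinv' => hx; have -> : (x != 0) = false by apply/negbTE. by []. Qed.

HB.instance Definition _ := GRing.NzRing_hasMulInverse.Build H qmulVr qdivrr qunitrP qinv_out.

Lemma qunitE (x : H) : (x \is a GRing.unit) = (x != 0). Proof. by []. Qed.

Lemma qmulf_eq0 (x y : H) : (x * y == 0) = (x == 0) || (y == 0).
Proof.
apply/idP/idP; last by case/orP => /eqP ->; rewrite ?mul0r ?mulr0.
case: (eqVneq x 0) => // x0 /eqP xy0 /=.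
by apply/eqP; rewrite -[y]mul1r -(qmulVq x0) -mulrA xy0 mulr0.
Qed.

Lemma scaleqE (r : R) (x : H) : r *: x = qscale r x. Proof. by []. Qed.
Lemma qscaleE (r : R) (x : H) : r *: x = r%:A * x.
Proof. by rewrite mulr_algl. Qed.
Lemma qscaleAr (r : R) (x y : H) : r *: (x * y) = x * (r *: y).
Proof.
rewrite !scaleqE !mulqE; case: x => a b c d; case: y => e f g h.
rewrite /qscale /qmul /=; apply: quat_eq => /=; ring.
Qed.
Lemma qalgC (r : R) (x : H) : r%:A * x = x * r%:A.
Proof. by rewrite -qscaleE -[x in r *: x]mulr1 qscaleAr. Qed.

Definition qv2r (x : H) : 'rV[R]_4 := \row_(i < 4) [:: q0 x; q1 x; q2 x; q3 x]`_i.
Definition qr2v (v : 'rV[R]_4) : H := Quat (v 0 0) (v 0 1) (v 0 2) (v 0 3).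
Lemma qv2r_lin : linear qv2r.
Proof.
move=> r x y; apply/rowP => i; rewrite !mxE.
by case: i => [[|[|[|[|i]]]] hi] //=; rewrite ?mulr0 ?addr0.
Qed.
Lemma qv2rK : cancel qv2r qr2v. Proof. by case=> a b c d; rewrite /qr2v !mxE. Qed.
Lemma qr2vK : cancel qr2v qv2r.
Proof.
move=> v; apply/rowP => i; rewrite mxE /=.
by case: i => [[|[|[|[|i]]]] hi] //=; congr (v _ _); apply/val_inj.
Qed.
Lemma qv2r_bij : bijective qv2r. Proof. exact: Bijective qv2rK qr2vK. Qed.

Fact quat_vect_iso : Vector.axiom 4 H.
Proof. exists qv2r; [exact: qv2r_lin | exact: qv2r_bij]. Qed.
HB.instance Definition _ := Lmodule_hasFinDim.Build R H quat_vect_iso.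

Lemma dimH : \dim {: H} = 4%N.
Proof. by rewrite dimvf. Qed.

End QuatUnit.

Section FreeHelp.
Variable K : fieldType.
Variable V : vectType K.

Lemma free3P (a b c : V) :
  reflect (forall r0 r1 r2 : K, r0 *: a + r1 *: b + r2 *: c = 0 -> [/\ r0 = 0, r1 = 0 & r2 = 0])
          (free [:: a; b; c]).
Proof.
have -> : [:: a; b; c] = val [tuple a; b; c] by [].
apply: (iffP (@freeP _ _ _ [tuple a; b; c])) => [h r0 r1 r2 e|h k e i].
  pose k := (fun i : 'I_3 => [:: r0; r1; r2]`_i).
  have ek : \sum_(i < 3) k i *: [tuple a; b; c]`_i = 0.
    by rewrite !big_ord_recr big_ord0 /= add0r.
  by split; [exact: (h k ek 0) | exact: (h k ek 1) | exact: (h k ek 2)].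
move: e; rewrite !big_ord_recr big_ord0 /= add0r => e.
have [h0 h1 h2] := h _ _ _ e.
case: i => [[|[|[|i]]] hi] //; [apply: etrans h0|apply: etrans h1|apply: etrans h2]; congr k; exact: val_inj.
Qed.

Lemma free2P (a b : V) :
  reflect (forall r0 r1 : K, r0 *: a + r1 *: b = 0 -> r0 = 0 /\ r1 = 0)
          (free [:: a; b]).
Proof.
have -> : [:: a; b] = val [tuple a; b] by [].
apply: (iffP (@freeP _ _ _ [tuple a; b])) => [h r0 r1 e|h k e i].
  pose k := (fun i : 'I_2 => [:: r0; r1]`_i).
  have ek : \sum_(i < 2) k i *: [tuple a; b]`_i = 0.
    by rewrite !big_ord_recr big_ord0 /= add0r.
  by split; [exact: (h k ek 0) | exact: (h k ek 1)].
move: e; rewrite !big_ord_recr big_ord0 /= add0r => e.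
have [h0 h1] := h _ _ e.
case: i => [[|[|i]] hi] //; [apply: etrans h0|apply: etrans h1]; congr k; exact: val_inj.
Qed.

Lemma free4P (a b c d : V) :
  reflect (forall r0 r1 r2 r3 : K, r0 *: a + r1 *: b + r2 *: c + r3 *: d = 0 ->
             [/\ r0 = 0, r1 = 0, r2 = 0 & r3 = 0])
          (free [:: a; b; c; d]).
Proof.
have -> : [:: a; b; c; d] = val [tuple a; b; c; d] by [].
apply: (iffP (@freeP _ _ _ [tuple a; b; c; d])) => [h r0 r1 r2 r3 e|h k e i].
  pose k := (fun i : 'I_4 => [:: r0; r1; r2; r3]`_i).
  have ek : \sum_(i < 4) k i *: [tuple a; b; c; d]`_i = 0.
    by rewrite !big_ord_recr big_ord0 /= add0r.
  by split; [exact: (h k ek 0) | exact: (h k ek 1) | exact: (h k ek 2) | exact: (h k ek 3)].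
move: e; rewrite !big_ord_recr big_ord0 /= add0r => e.
have [h0 h1 h2 h3] := h _ _ _ _ e.
case: i => [[|[|[|[|i]]]] hi] //; [apply: etrans h0|apply: etrans h1|apply: etrans h2|apply: etrans h3]; congr k; exact: val_inj.
Qed.

Lemma memv_span2P (a b v : V) :
  reflect (exists r0 r1 : K, v = r0 *: a + r1 *: b) (v \in <<[:: a; b]>>%VS).
Proof.
apply: (iffP idP) => [|[r0 [r1 ->]]]; last first.
  by rewrite memvD ?memvZ ?memv_span ?inE ?eqxx ?orbT.
rewrite span_cons span_seq1 => /memv_addP [x /vlineP[r0 ->]] [y /vlineP[r1 ->] ->].
by exists r0, r1.
Qed.

End FreeHelp.

Section Comp.
Variable R : realType.
Local Notation H := (quat R).
Implicit Types x y : H.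
Lemma cA0 x y : q0 (x + y) = q0 x + q0 y. Proof. by []. Qed.
Lemma cA1 x y : q1 (x + y) = q1 x + q1 y. Proof. by []. Qed.
Lemma cA2 x y : q2 (x + y) = q2 x + q2 y. Proof. by []. Qed.
Lemma cA3 x y : q3 (x + y) = q3 x + q3 y. Proof. by []. Qed.
Lemma cN0 x : q0 (- x) = - q0 x. Proof. by []. Qed.
Lemma cN1 x : q1 (- x) = - q1 x. Proof. by []. Qed.
Lemma cN2 x : q2 (- x) = - q2 x. Proof. by []. Qed.
Lemma cN3 x : q3 (- x) = - q3 x. Proof. by []. Qed.
Lemma cM0 x y : q0 (x * y) = q0 x * q0 y - q1 x * q1 y - q2 x * q2 y - q3 x * q3 y. Proof. by []. Qed.
Lemma cM1 x y : q1 (x * y) = q0 x * q1 y + q1 x * q0 y + q2 x * q3 y - q3 x * q2 y. Proof. by []. Qed.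
Lemma cM2 x y : q2 (x * y) = q0 x * q2 y - q1 x * q3 y + q2 x * q0 y + q3 x * q1 y. Proof. by []. Qed.
Lemma cM3 x y : q3 (x * y) = q0 x * q3 y + q1 x * q2 y - q2 x * q1 y + q3 x * q0 y. Proof. by []. Qed.
Lemma cS0 (r : R) x : q0 (r *: x) = r * q0 x. Proof. by []. Qed.
Lemma cS1 (r : R) x : q1 (r *: x) = r * q1 x. Proof. by []. Qed.
Lemma cS2 (r : R) x : q2 (r *: x) = r * q2 x. Proof. by []. Qed.
Lemma cS3 (r : R) x : q3 (r *: x) = r * q3 x. Proof. by []. Qed.
Lemma cZ0 : q0 (0 : H) = 0. Proof. by []. Qed.
Lemma cZ1 : q1 (0 : H) = 0. Proof. by []. Qed.
Lemma cZ2 : q2 (0 : H) = 0. Proof. by []. Qed.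
Lemma cZ3 : q3 (0 : H) = 0. Proof. by []. Qed.
Lemma cO0 : q0 (1 : H) = 1. Proof. by []. Qed.
Lemma cO1 : q1 (1 : H) = 0. Proof. by []. Qed.
Lemma cO2 : q2 (1 : H) = 0. Proof. by []. Qed.
Lemma cO3 : q3 (1 : H) = 0. Proof. by []. Qed.
Lemma cB0 x y : q0 (x - y) = q0 x - q0 y. Proof. by []. Qed.
Lemma cB1 x y : q1 (x - y) = q1 x - q1 y. Proof. by []. Qed.
Lemma cB2 x y : q2 (x - y) = q2 x - q2 y. Proof. by []. Qed.
Lemma cB3 x y : q3 (x - y) = q3 x - q3 y. Proof. by []. Qed.
End Comp.

Ltac csimp := rewrite ?cA0 ?cA1 ?cA2 ?cA3 ?cN0 ?cN1 ?cN2 ?cN3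
  ?cM0 ?cM1 ?cM2 ?cM3 ?cS0 ?cS1 ?cS2 ?cS3 ?cZ0 ?cZ1 ?cZ2 ?cZ3 ?cO0 ?cO1 ?cO2 ?cO3 /=.
Ltac qring := apply: quat_eq; csimp; ring.

Section LemmaI.
Variable R : realType.
Local Notation H := (quat R).

Definition qI : H := Quat 0 1 0 0.
Definition qJ : H := Quat 0 0 1 0.
Definition qK : H := Quat 0 0 0 1.

Lemma comp4 (x : H) : x = 0 -> [/\ q0 x = 0, q1 x = 0, q2 x = 0 & q3 x = 0].
Proof. by move=> ->. Qed.

Lemma lemmaL (c0 c1 c2 c3 : H) :
  (forall t : H, c0 * t * 1 + c1 * t * qI + c2 * t * qJ + c3 * t * qK = 0) ->
  [/\ c0 = 0, c1 = 0, c2 = 0 & c3 = 0].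
Proof.
move=> h.
have [a1 a2 a3 a4] := comp4 (h 1).
have [b1 b2 b3 b4] := comp4 (h qI).
have [d1 d2 d3 d4] := comp4 (h qJ).
have [e1 e2 e3 e4] := comp4 (h qK).
move: a1 a2 a3 a4 b1 b2 b3 b4 d1 d2 d3 d4 e1 e2 e3 e4; clear h.
csimp.
case: c0 => ? ? ? ?; case: c1 => ? ? ? ?; case: c2 => ? ? ? ?; case: c3 => ? ? ? ? /=.
rewrite !(mul0r, mulr0, mul1r, mulr1, addr0, add0r, subr0, sub0r).
move=> *.
by split; apply: quat_eq => /=; lra.
Qed.


Lemma lemmaL' (c0 c1 c2 c3 : H) :
  (forall t : H, 1 * t * c0 + qI * t * c1 + qJ * t * c2 + qK * t * c3 = 0) ->
  [/\ c0 = 0, c1 = 0, c2 = 0 & c3 = 0].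
Proof.
move=> h.
have [a1 a2 a3 a4] := comp4 (h 1).
have [b1 b2 b3 b4] := comp4 (h qI).
have [d1 d2 d3 d4] := comp4 (h qJ).
have [e1 e2 e3 e4] := comp4 (h qK).
move: a1 a2 a3 a4 b1 b2 b3 b4 d1 d2 d3 d4 e1 e2 e3 e4; clear h.
csimp.
case: c0 => ? ? ? ?; case: c1 => ? ? ? ?; case: c2 => ? ? ? ?; case: c3 => ? ? ? ? /=.
rewrite !(mul0r, mulr0, mul1r, mulr1, addr0, add0r, subr0, sub0r).
move=> *.
by split; apply: quat_eq => /=; lra.
Qed.

Definition cb (f : H -> R) (a0 a1 a2 h0 h1 h2 : H) : H :=
  f h0 *: a0 + f h1 *: a1 + f h2 *: a2.

Lemma lemmaI_ident (a0 a1 a2 h0 h1 h2 t : H) :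
  a0 * t * h0 + a1 * t * h1 + a2 * t * h2 =
  cb (@q0 R) a0 a1 a2 h0 h1 h2 * t * 1 + cb (@q1 R) a0 a1 a2 h0 h1 h2 * t * qI +
  cb (@q2 R) a0 a1 a2 h0 h1 h2 * t * qJ + cb (@q3 R) a0 a1 a2 h0 h1 h2 * t * qK.
Proof. rewrite /cb; qring. Qed.

Lemma lemmaI (a0 a1 a2 h0 h1 h2 : H) : free [:: a0; a1; a2] ->
  (forall t : H, a0 * t * h0 + a1 * t * h1 + a2 * t * h2 = 0) ->
  [/\ h0 = 0, h1 = 0 & h2 = 0].
Proof.
move=> /free3P fr h.
have [c0 c1 c2 c3] : [/\ cb (@q0 R) a0 a1 a2 h0 h1 h2 = 0, cb (@q1 R) a0 a1 a2 h0 h1 h2 = 0,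
     cb (@q2 R) a0 a1 a2 h0 h1 h2 = 0 & cb (@q3 R) a0 a1 a2 h0 h1 h2 = 0].
  by apply: lemmaL => t; rewrite -lemmaI_ident.
have [x0 y0 z0] := fr _ _ _ c0.
have [x1 y1 z1] := fr _ _ _ c1.
have [x2 y2 z2] := fr _ _ _ c2.
have [x3 y3 z3] := fr _ _ _ c3.
by split; apply: quat_eq.
Qed.

Lemma lemmaI'_ident (a0 a1 a2 h0 h1 h2 t : H) :
  h0 * t * a0 + h1 * t * a1 + h2 * t * a2 =
  1 * t * cb (@q0 R) a0 a1 a2 h0 h1 h2 + qI * t * cb (@q1 R) a0 a1 a2 h0 h1 h2 +
  qJ * t * cb (@q2 R) a0 a1 a2 h0 h1 h2 + qK * t * cb (@q3 R) a0 a1 a2 h0 h1 h2.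
Proof. rewrite /cb; qring. Qed.

Lemma lemmaI' (a0 a1 a2 h0 h1 h2 : H) : free [:: a0; a1; a2] ->
  (forall t : H, h0 * t * a0 + h1 * t * a1 + h2 * t * a2 = 0) ->
  [/\ h0 = 0, h1 = 0 & h2 = 0].
Proof.
move=> /free3P fr h.
have [c0 c1 c2 c3] : [/\ cb (@q0 R) a0 a1 a2 h0 h1 h2 = 0, cb (@q1 R) a0 a1 a2 h0 h1 h2 = 0,
     cb (@q2 R) a0 a1 a2 h0 h1 h2 = 0 & cb (@q3 R) a0 a1 a2 h0 h1 h2 = 0].
  by apply: lemmaL' => t; rewrite -lemmaI'_ident.
have [x0 y0 z0] := fr _ _ _ c0.
have [x1 y1 z1] := fr _ _ _ c1.
have [x2 y2 z2] := fr _ _ _ c2.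
have [x3 y3 z3] := fr _ _ _ c3.
by split; apply: quat_eq.
Qed.
End LemmaI.

Lemma ord2P (i : 'I_2) : i = 0 \/ i = 1.
Proof. by case: i => [[|[|i]] hi] //; [left|right]; exact: val_inj. Qed.
Lemma ord3P (i : 'I_3) : [\/ i = 0, i = 1 | i = 2].
Proof. by case: i => [[|[|[|i]]] hi] //; [constructor 1|constructor 2|constructor 3]; exact: val_inj. Qed.

Section Sel.
Variable T : Type.
Definition vec2 (x y : T) (i : 'I_2) : T := if i == 0 then x else y.
Lemma vec2_0 x y : vec2 x y 0 = x. Proof. by []. Qed.
Lemma vec2_1 x y : vec2 x y 1 = y. Proof. by []. Qed.
Definition sel3 (x y z : T) (l : 'I_3) : T := if l == 0 then x else if l == 1 then y else z.
Lemma sel3_0 x y z : sel3 x y z 0 = x. Proof. by []. Qed.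
Lemma sel3_1 x y z : sel3 x y z 1 = y. Proof. by []. Qed.
Lemma sel3_2 x y z : sel3 x y z 2 = z. Proof. by []. Qed.
End Sel.

Section Dec.
Variable R : realType.
Local Notation H := (quat R).
Local Notation M2 := 'M[H]_2.

Lemma sum2 (f : 'I_2 -> H) : \sum_(i < 2) f i = f 0 + f 1.
Proof. by rewrite !big_ord_recl big_ord0 addr0; congr (_ + f _); exact: val_inj. Qed.
Lemma sum3 (f : 'I_3 -> H) : \sum_(i < 3) f i = f 0 + f 1 + f 2.
Proof.
rewrite !big_ord_recl big_ord0 addr0 addrA; congr (_ + f _ + f _); exact: val_inj.
Qed.

Definition mx2 (a b c d : H) : M2 := \matrix_(i, k) vec2 (vec2 a b k) (vec2 c d k) i.
Lemma mx2E00 a b c d : mx2 a b c d 0 0 = a. Proof. by rewrite mxE. Qed.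
Lemma mx2E01 a b c d : mx2 a b c d 0 1 = b. Proof. by rewrite mxE. Qed.
Lemma mx2E10 a b c d : mx2 a b c d 1 0 = c. Proof. by rewrite mxE. Qed.
Lemma mx2E11 a b c d : mx2 a b c d 1 1 = d. Proof. by rewrite mxE. Qed.

Lemma mulmx2E (A B : M2) i k : (A *m B) i k = A i 0 * B 0 k + A i 1 * B 1 k.
Proof. by rewrite mxE sum2. Qed.

Lemma matrix2P (A B : M2) : A 0 0 = B 0 0 -> A 0 1 = B 0 1 -> A 1 0 = B 1 0 -> A 1 1 = B 1 1 -> A = B.
Proof.
move=> h00 h01 h10 h11; apply/matrixP => i k.
by case: (ord2P i) => ->; case: (ord2P k) => ->.
Qed.

Definition Dec (M : 'I_3 -> M2) :=
  exists (a c : 'I_3 -> 'I_2 -> H) (q : 'I_3 -> 'I_3 -> H),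
    forall j i k, M j i k = \sum_(l < 3) a l i * q l j * c l k.

Lemma Dec_frame (M N : 'I_3 -> M2) (P Q : M2) :
  Dec N -> (forall j, M j = P *m N j *m Q) -> Dec M.
Proof.
case=> a [c [q hN]] hM.
exists (fun l i => \sum_(i' < 2) P i i' * a l i'), (fun l k => \sum_(k' < 2) c l k' * Q k' k), q.
move=> j i k; rewrite hM.
transitivity (\sum_(i' < 2) \sum_(k' < 2) \sum_(l < 3) P i i' * a l i' * q l j * c l k' * Q k' k).
  rewrite -mulmxA mxE; apply: eq_bigr => i' _; rewrite mxE mulr_sumr; apply: eq_big => // k' _.
  by rewrite hN mulr_suml mulr_sumr; apply: eq_bigr => l _; rewrite !mulrA.
transitivity (\sum_(l < 3) \sum_(i' < 2) \sum_(k' < 2) P i i' * a l i' * q l j * c l k' * Q k' k).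
  rewrite [RHS]exchange_big /=; apply: eq_bigr => i' _; by rewrite exchange_big.
apply: eq_bigr => l _; rewrite mulr_suml big_distrlr /=.
by apply: eq_bigr => i' _; apply: eq_bigr => k' _; rewrite !mulrA.
Qed.

Lemma Dec_perm (M : 'I_3 -> M2) (s : 'I_3 -> 'I_3) : Dec M -> Dec (M \o s).
Proof. by case=> a [c [q h]]; exists a, c, (fun l j => q l (s j)) => j i k /=; rewrite h. Qed.

Ltac simp01 := rewrite ?(vec2_0, vec2_1, sel3_0, sel3_1, sel3_2, mul1r, mulr1, mul0r, mulr0, addr0, add0r).

Lemma Dec_up (N : 'I_3 -> M2) : (forall j, N j 1 0 = 0) -> Dec N.
Proof.
move=> h.
exists (sel3 (vec2 1 0) (vec2 1 0) (vec2 0 1)), (sel3 (vec2 1 0) (vec2 0 1) (vec2 0 1)),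
  (sel3 (fun j => N j 0 0) (fun j => N j 0 1) (fun j => N j 1 1)).
move=> j i k; rewrite sum3.
by case: (ord2P i) => ->; case: (ord2P k) => ->; simp01; rewrite ?h.
Qed.

Lemma Dec_low (N : 'I_3 -> M2) : (forall j, N j 0 1 = 0) -> Dec N.
Proof.
move=> h.
exists (sel3 (vec2 1 0) (vec2 0 1) (vec2 0 1)), (sel3 (vec2 1 0) (vec2 1 0) (vec2 0 1)),
  (sel3 (fun j => N j 0 0) (fun j => N j 1 0) (fun j => N j 1 1)).
move=> j i k; rewrite sum3.
by case: (ord2P i) => ->; case: (ord2P k) => ->; simp01; rewrite ?h.
Qed.

Lemma Dec_sym (N : 'I_3 -> M2) : (forall j, N j 0 1 = N j 1 0) -> Dec N.
Proof.
move=> h.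
exists (sel3 (vec2 1 0) (vec2 0 1) (vec2 1 1)), (sel3 (vec2 1 0) (vec2 0 1) (vec2 1 1)),
  (sel3 (fun j => N j 0 0 - N j 0 1) (fun j => N j 1 1 - N j 0 1) (fun j => N j 0 1)).
move=> j i k; rewrite sum3.
by case: (ord2P i) => ->; case: (ord2P k) => ->; simp01; rewrite ?subrK ?h.
Qed.

Lemma Dec_diag2 (N : 'I_3 -> M2) :
  N 0 0 1 = 0 -> N 0 1 0 = 0 -> (forall i k, N 2 i k = 0) -> Dec N.
Proof.
move=> h01 h10 h2.
pose p := N 1 0 1; pose q' := N 1 1 0.
pose al := if p != 0 then q' * p^-1 else 1.
pose z := if p != 0 then p else q'.
pose be : H := if p != 0 then 1 else 0.
have e01 : z * be = p by rewrite /z /be; case: (eqVneq p 0) => [->|]; simp01.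
have e10 : al * z = q' by rewrite /z /al; case: (eqVneq p 0) => [_|hp]; simp01; rewrite // mulrVK // qunitE.
exists (sel3 (vec2 1 0) (vec2 0 1) (vec2 1 al)), (sel3 (vec2 1 0) (vec2 0 1) (vec2 1 be)),
  (sel3 (sel3 (N 0 0 0) (N 1 0 0 - z) 0) (sel3 (N 0 1 1) (N 1 1 1 - al * z * be) 0) (sel3 0 z 0)).
move=> j i k; rewrite sum3.
case: (ord3P j) => ->; case: (ord2P i) => ->; case: (ord2P k) => ->; simp01; rewrite ?h2 ?h01 ?h10 ?subrK ?e01 ?e10 //.
all: try by rewrite addrC subrK.
Qed.

End Dec.

Section Frames.
Variable R : realType.
Local Notation H := (quat R).
Local Notation M2 := 'M[H]_2.

Lemma id00 : (1 : M2) 0 0 = 1. Proof. by rewrite mxE. Qed.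
Lemma id01 : (1 : M2) 0 1 = 0. Proof. by rewrite mxE. Qed.
Lemma id10 : (1 : M2) 1 0 = 0. Proof. by rewrite mxE. Qed.
Lemma id11 : (1 : M2) 1 1 = 1. Proof. by rewrite mxE. Qed.

Ltac mxs := rewrite ?(mulmx2E, mx2E00, mx2E01, mx2E10, mx2E11, id00, id01, id10, id11,
   mul1r, mulr1, mul0r, mulr0, addr0, add0r, mulNr, mulrN, subrr, addNr).

Lemma Dec_via (M : 'I_3 -> M2) (X X' Z Z' : M2) :
  X' *m X = 1 -> Z *m Z' = 1 -> Dec (fun j => X *m M j *m Z) -> Dec M.
Proof.
move=> hX hZ hD; apply: (@Dec_frame R M _ X' Z' hD) => j.
by rewrite /= !mulmxA hX mul1mx -!mulmxA hZ mulmx1.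
Qed.

Lemma pair_neq0 (x : H * H) : x != 0 -> x.1 != 0 \/ x.2 != 0.
Proof.
case: x => a b /=; case: (eqVneq a 0) => [->|]; last by left.
case: (eqVneq b 0) => [->|]; last by right.
by rewrite eqxx.
Qed.

Lemma frame_row0 (x : H * H) : x != 0 ->
  exists X X' : M2, [/\ X' *m X = 1, X 0 0 = x.1 & X 0 1 = x.2].
Proof.
case: x => x1 x2 /pair_neq0 /= [h|h].
  all: rewrite -qunitE in h.
  exists (mx2 x1 x2 0 1), (mx2 x1^-1 (- (x1^-1 * x2)) 0 1); split; mxs => //.
  by apply: matrix2P; mxs; rewrite ?mulrA ?mulVr ?mulrV ?mul1r ?mulr1 ?subrr ?addrN ?addNr.
exists (mx2 x1 x2 1 0), (mx2 0 1 x2^-1 (- (x2^-1 * x1))); split; mxs => //.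
by apply: matrix2P; mxs; rewrite ?mulrA ?mulVr ?mulrV ?mul1r ?mulr1 ?subrr ?addrN ?addNr.
Qed.

Lemma frame_row1 (x : H * H) : x != 0 ->
  exists X X' : M2, [/\ X' *m X = 1, X 1 0 = x.1 & X 1 1 = x.2].
Proof.
case: x => x1 x2 /pair_neq0 /= [h|h]; last first.
  all: rewrite -qunitE in h.
  exists (mx2 1 0 x1 x2), (mx2 1 0 (- (x2^-1 * x1)) x2^-1); split; mxs => //.
  by apply: matrix2P; mxs; rewrite ?mulrA ?mulVr ?mulrV ?mul1r ?mulr1 ?subrr ?addrN ?addNr.
exists (mx2 0 1 x1 x2), (mx2 (- (x1^-1 * x2)) x1^-1 1 0); split; mxs => //.
by apply: matrix2P; mxs; rewrite ?mulrA ?mulVr ?mulrV ?mul1r ?mulr1 ?subrr ?addrN ?addNr.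
Qed.

Lemma frame_col0 (w : H * H) : w != 0 ->
  exists Z Z' : M2, [/\ Z *m Z' = 1, Z 0 0 = w.1 & Z 1 0 = w.2].
Proof.
case: w => w1 w2 /pair_neq0 /= [h|h].
  all: rewrite -qunitE in h.
  exists (mx2 w1 0 w2 1), (mx2 w1^-1 0 (- (w2 * w1^-1)) 1); split; mxs => //.
  by apply: matrix2P; mxs; rewrite ?mulrA ?mulVr ?mulrV ?mul1r ?mulr1 ?subrr ?addrN ?addNr.
exists (mx2 w1 1 w2 0), (mx2 0 w2^-1 1 (- (w1 * w2^-1))); split; mxs => //.
by apply: matrix2P; mxs; rewrite ?mulrA ?mulVr ?mulrV ?mul1r ?mulr1 ?subrr ?addrN ?addNr.
Qed.

Lemma frame_col1 (w : H * H) : w != 0 ->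
  exists Z Z' : M2, [/\ Z *m Z' = 1, Z 0 1 = w.1 & Z 1 1 = w.2].
Proof.
case: w => w1 w2 /pair_neq0 /= [h|h]; last first.
  all: rewrite -qunitE in h.
  exists (mx2 1 w1 0 w2), (mx2 1 (- (w1 * w2^-1)) 0 w2^-1); split; mxs => //.
  by apply: matrix2P; mxs; rewrite ?mulrA ?mulVr ?mulrV ?mul1r ?mulr1 ?subrr ?addrN ?addNr.
exists (mx2 0 w1 1 w2), (mx2 (- (w2 * w1^-1)) 1 w1^-1 0); split; mxs => //.
by apply: matrix2P; mxs; rewrite ?mulrA ?mulVr ?mulrV ?mul1r ?mulr1 ?subrr ?addrN ?addNr.
Qed.

Lemma mul3E (X M Z : M2) r s :
  (X *m M *m Z) r s = (X r 0 * M 0 0 + X r 1 * M 1 0) * Z 0 s + (X r 0 * M 0 1 + X r 1 * M 1 1) * Z 1 s.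
Proof. by rewrite !mulmx2E. Qed.

End Frames.

Section VecHelp.
Variable R : realType.
Local Notation H := (quat R).

Lemma dim8 : \dim {: (H * H)%type} = 8%N. Proof. by rewrite dimvf. Qed.
Lemma dim12 : \dim {: ((H * H) * H)%type} = 12%N. Proof. by rewrite dimvf. Qed.
Lemma dim16 : \dim {: ((H * H) * (H * H))%type} = 16%N. Proof. by rewrite dimvf. Qed.
Lemma dim4 : \dim {: H} = 4%N. Proof. by rewrite dimvf. Qed.

Lemma ker_dim (U V : vectType R) (f : {linear U -> V}) :
  (\dim {:U} <= \dim {:V} + \dim (lker (linfun f)))%N.
Proof.
have := limg_ker_dim (linfun f) fullv; rewrite capfv => e.
rewrite -{1}e addnC leq_add2r; apply: dimvS; exact: subvf.
Qed.

Lemma ker_nonzero (U V : vectType R) (f : {linear U -> V}) :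
  (\dim {:V} < \dim {:U})%N -> exists u, u != 0 /\ f u = 0.
Proof.
move=> hd; have := ker_dim f => hk.
have nz : lker (linfun f) != 0%VS.
  by rewrite -dimv_eq0 -lt0n; rewrite -(ltn_add2l (\dim {:V})) addn0; exact: leq_trans hd hk.
exists (vpick (lker (linfun f))); split; first by rewrite vpick0.
by have := memv_pick (lker (linfun f)); rewrite memv_ker lfunE /= => /eqP.
Qed.

Lemma inj_surj (U : vectType R) (K : {vspace U}) (g : {linear U -> H}) :
  (4 <= \dim K)%N -> (forall u, u \in K -> g u = 0 -> u = 0) ->
  forall t, exists2 u, u \in K & g u = t.
Proof.
move=> hd hi t.
have h0 : (K :&: lker (linfun g) = 0)%VS.
  apply/eqP; rewrite -subv0; apply/subvP => u /memv_capP [uK].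
  by rewrite memv_ker lfunE /= => /eqP /(hi _ uK) ->; rewrite memv0.
have hf : (linfun g @: K)%VS = fullv.
  apply/eqP; rewrite eqEdim subvf /= limg_dim_eq // dim4; exact: hd.
have : t \in (linfun g @: K)%VS by rewrite hf memvf.
by case/memv_imgP => u uK ->; exists u => //; rewrite lfunE.
Qed.

End VecHelp.

Section ML.
Variable R : realType.
Local Notation H := (quat R).
Local Notation M2 := 'M[H]_2.
Variable N : 'I_3 -> M2.

Local Notation U4 := ((H * H) * (H * H))%type.
Local Notation U3 := ((H * H) * H)%type.
Local Notation U2 := (H * H)%type.

Definition rr (u : U4) (j : 'I_3) : H :=
  N j 0 0 * u.2.1 + N j 0 1 * u.2.2 - (u.1.1 * N j 0 0 + u.1.2 * N j 1 0).
Definition psi (u : U4) : U3 := ((rr u 0, rr u 1), rr u 2).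

Lemma psi_lin : linear psi.
Proof.
move=> a [[x1 x2] [x3 x4]] [[y1 y2] [y3 y4]].
rewrite /psi /rr /=.
congr ((_, _), _); qring.
Qed.
HB.instance Definition _ := GRing.isLinear.Build R U4 U3 *:%R psi psi_lin.

Definition gz (u : U4) : H := u.2.1.
Lemma gz_lin : linear gz. Proof. by move=> a [[? ?] [? ?]] [[? ?] [? ?]]. Qed.
HB.instance Definition _ := GRing.isLinear.Build R U4 H *:%R gz gz_lin.
Definition gx (u : U4) : H := u.1.1.
Lemma gx_lin : linear gx. Proof. by move=> a [[? ?] [? ?]] [[? ?] [? ?]]. Qed.
HB.instance Definition _ := GRing.isLinear.Build R U4 H *:%R gx gx_lin.

Definition hmap (h : U3) : U2 :=
  (N 0 0 0 * h.1.1 + N 1 0 0 * h.1.2 + N 2 0 0 * h.2,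
   N 0 1 0 * h.1.1 + N 1 1 0 * h.1.2 + N 2 1 0 * h.2).
Lemma hmap_lin : linear hmap.
Proof. move=> a [[? ?] ?] [[? ?] ?]; rewrite /hmap /=; congr (_, _); qring. Qed.
HB.instance Definition _ := GRing.isLinear.Build R U3 U2 *:%R hmap hmap_lin.

Definition gmap (g : U3) : U2 :=
  (g.1.1 * N 0 0 0 + g.1.2 * N 1 0 0 + g.2 * N 2 0 0,
   g.1.1 * N 0 0 1 + g.1.2 * N 1 0 1 + g.2 * N 2 0 1).
Lemma gmap_lin : linear gmap.
Proof. move=> a [[? ?] ?] [[? ?] ?]; rewrite /gmap /=; congr (_, _); qring. Qed.
HB.instance Definition _ := GRing.isLinear.Build R U3 U2 *:%R gmap gmap_lin.

Lemma psi0 u : psi u = 0 -> forall j, rr u j = 0.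
Proof.
move=> h j; have h0 := congr1 (fun p : U3 => p.1.1) h; have h1 := congr1 (fun p : U3 => p.1.2) h.
have h2 := congr1 (fun p : U3 => p.2) h.
by case: (ord3P j) => ->.
Qed.

Lemma inK u : u \in lker (linfun psi) -> forall j, rr u j = 0.
Proof. by rewrite memv_ker lfunE /= => /eqP; exact: psi0. Qed.

End ML.

Section ML2.
Variable R : realType.
Local Notation H := (quat R).
Local Notation M2 := 'M[H]_2.
Local Notation U4 := ((H * H) * (H * H))%type.
Local Notation U3 := ((H * H) * H)%type.

Ltac mxs := rewrite ?(mulmx2E, mx2E00, mx2E01, mx2E10, mx2E11, id00, id01, id10, id11,
   mul1r, mulr1, mul0r, mulr0, addr0, add0r, mulNr, mulrN, subrr, addNr).

Lemma pair0 (x y : H) : x = 0 -> y = 0 -> (x, y) = 0. Proof. by move=> -> ->. Qed.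

Lemma ML (N : 'I_3 -> M2) : free [:: N 0 0 0; N 1 0 0; N 2 0 0] -> Dec N.
Proof.
move=> fr.
case: (classic (exists x : H * H, x != 0 /\ forall j, x.1 * N j 0 0 + x.2 * N j 1 0 = 0)) => [[x [nx hx]]|nA].
  have [X [X' [hX hX0 hX1]]] := frame_row1 nx.
  apply: (@Dec_via _ N X X' 1 1 hX (mulmx1 1)); apply: Dec_up => j /=.
  by rewrite mulmx1 mulmx2E hX0 hX1 hx.
case: (classic (exists w : H * H, w != 0 /\ forall j, N j 0 0 * w.1 + N j 0 1 * w.2 = 0)) => [[w [nw hw]]|nB].
  have [Z [Z' [hZ hZ0 hZ1]]] := frame_col1 nw.
  apply: (@Dec_via _ N 1 1 Z Z' (mulmx1 1) hZ); apply: Dec_low => j /=.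
  by rewrite mul1mx mulmx2E hZ0 hZ1 hw.
set K := lker (linfun (psi N)).
have dK : (4 <= \dim K)%N.
  by have := ker_dim (psi N); rewrite dim16 dim12.
have claimA : exists2 u, u \in K & u.2.2 != 0.
  apply: NNPP => hn.
  have h22 : forall u, u \in K -> u.2.2 = 0.
    by move=> u uK; apply: NNPP => h; apply: hn; exists u => //; apply/eqP.
  have hs : forall t, exists2 u, u \in K & gz u = t.
    apply: (@inj_surj R _ K (@gz R) dK) => u uK hz.
    have e := inK uK; have e2 := h22 _ uK.
    move: u uK hz e e2 => [[x1 x2] [x3 x4]] _ /= hz e e2; rewrite /gz /= in hz.
    have hx : (x1, x2) = 0.
      apply: NNPP => hx; apply: nA; exists (x1, x2); split; first by apply/eqP.
      move=> j /=; have := e j; rewrite /rr /= hz e2 !mulr0 !add0r => /eqP.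
      by rewrite oppr_eq0 => /eqP.
    by case: hx => -> ->; rewrite hz e2.
  have [h [nh hh]] : exists u, u != 0 /\ hmap N u = 0 by apply: ker_nonzero; rewrite dim12 dim8.
  move: h nh hh => [[h0 h1] h2] nh hh.
  have hh0 := congr1 fst hh; have hh1 := congr1 snd hh; rewrite /= in hh0 hh1.
  have [z0 z1 z2] : [/\ h0 = 0, h1 = 0 & h2 = 0].
    apply: (lemmaI fr) => t.
    have [u uK ut] := hs t.
    have e := inK uK; have e2 := h22 _ uK.
    have ej : forall j, N j 0 0 * t = u.1.1 * N j 0 0 + u.1.2 * N j 1 0.
      by move=> j; apply/eqP; rewrite -subr_eq0 -ut -(e j) /rr e2 mulr0 addr0.
    rewrite !ej.
    transitivity (u.1.1 * (N 0 0 0 * h0 + N 1 0 0 * h1 + N 2 0 0 * h2) +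
                  u.1.2 * (N 0 1 0 * h0 + N 1 1 0 * h1 + N 2 1 0 * h2)); first by qring.
    by rewrite hh0 hh1 !mulr0 addr0.
  by move: nh; rewrite z0 z1 z2 eqxx.
have claimB : exists2 u, u \in K & u.1.2 != 0.
  apply: NNPP => hn.
  have h12 : forall u, u \in K -> u.1.2 = 0.
    by move=> u uK; apply: NNPP => h; apply: hn; exists u => //; apply/eqP.
  have hs : forall t, exists2 u, u \in K & gx u = t.
    apply: (@inj_surj R _ K (@gx R) dK) => u uK hz.
    have e := inK uK; have e2 := h12 _ uK.
    move: u uK hz e e2 => [[x1 x2] [x3 x4]] _ /= hz e e2; rewrite /gx /= in hz.
    have hx : (x3, x4) = 0.
      apply: NNPP => hx; apply: nB; exists (x3, x4); split; first by apply/eqP.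
      move=> j /=; have := e j; rewrite /rr /= hz e2 !mul0r !add0r oppr0 addr0.
      by apply.
    by case: hx => -> ->; rewrite hz e2.
  have [g [ng hg]] : exists u, u != 0 /\ gmap N u = 0 by apply: ker_nonzero; rewrite dim12 dim8.
  move: g ng hg => [[g0 g1] g2] ng hg.
  have hg0 := congr1 fst hg; have hg1 := congr1 snd hg; rewrite /= in hg0 hg1.
  have [z0 z1 z2] : [/\ g0 = 0, g1 = 0 & g2 = 0].
    apply: (lemmaI' fr) => t.
    have [u uK ut] := hs t.
    have e := inK uK; have e2 := h12 _ uK.
    have ej : forall j, t * N j 0 0 = N j 0 0 * u.2.1 + N j 0 1 * u.2.2.
      move=> j; apply/eqP; rewrite eq_sym -subr_eq0 -ut -(e j) /rr e2 mul0r addr0.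
      by [].
    rewrite -!mulrA !ej.
    transitivity ((g0 * N 0 0 0 + g1 * N 1 0 0 + g2 * N 2 0 0) * u.2.1 +
                  (g0 * N 0 0 1 + g1 * N 1 0 1 + g2 * N 2 0 1) * u.2.2); first by qring.
    by rewrite hg0 hg1 !mul0r addr0.
  by move: ng; rewrite z0 z1 z2 eqxx.
have [u uK [n12 n22]] : exists2 u, u \in K & (u.1.2 != 0 /\ u.2.2 != 0).
  case: claimA => u1 u1K n1; case: claimB => u2 u2K n2.
  case: (eqVneq u1.1.2 0) => [e1|]; last by exists u1.
  case: (eqVneq u2.2.2 0) => [e2|]; last by exists u2.
  exists (u1 + u2); first by rewrite memvD.
  by rewrite /= e1 e2 add0r addr0.
have e := inK uK.
move: u uK n12 n22 e => [[x y] [z t]] _ /= ny nt e.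
rewrite -qunitE in ny; rewrite -qunitE in nt.
apply: (@Dec_via _ N (mx2 1 0 x y) (mx2 1 0 (- (y^-1 * x)) y^-1)
                      (mx2 1 z 0 t) (mx2 1 (- (z * t^-1)) 0 t^-1)).
- by apply: matrix2P; mxs; rewrite ?mulrA ?mulVr ?mulrV ?mul1r ?mulr1 ?subrr ?addrN ?addNr.
- by apply: matrix2P; mxs; rewrite ?mulrA ?mulVr ?mulrV ?mul1r ?mulr1 ?subrr ?addrN ?addNr.
apply: Dec_sym => j /=.
rewrite !mul3E; mxs.
by apply/eqP; rewrite -subr_eq0; apply/eqP; have := e j; rewrite /rr.
Qed.

End ML2.

Section FreeMore.
Variable K : fieldType.
Variable V : vectType K.
Implicit Types a b c x y z : V.

Lemma free3_12 a b c : free [:: a; b; c] -> free [:: a; b].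
Proof.
move/free3P => h; apply/free2P => r0 r1 e.
by have [] := h r0 r1 0; rewrite ?scale0r ?addr0.
Qed.

Lemma free_shear x y z (r : K) : free [:: x; y; z] -> free [:: z + r *: x; y; x].
Proof.
move/free3P => h; apply/free3P => a b c e.
have e' : (a * r + c) *: x + b *: y + a *: z = 0.
  rewrite -e scalerDr scalerA scalerDl.
  by rewrite [a *: z + _]addrC -!addrA; congr (_ + _); rewrite addrCA addrA addrC.
have [h1 h2 h3] := h _ _ _ e'.
by move: h1; rewrite h3 mul0r add0r => ->.
Qed.

Lemma free_scale13 x y z (e : K) : e != 0 -> free [:: x + e *: z; y; x] ->
  free [:: z + e^-1 *: x; y; e^-1 *: x].
Proof.
Abort.

Lemma free_lt (x y z c : V) (e : K) : e != 0 -> free [:: x + e *: c; y; z] ->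
  free [:: c + e^-1 *: x; y; e^-1 *: z].
Proof.
move=> ne /free3P h; apply/free3P => a b d E.
have E' : (a / e) *: (x + e *: c) + b *: y + (d / e) *: z = 0.
  rewrite -E scalerDr !scalerA mulfVK // scalerDr scalerA [_ *: c + _]addrC.
  by rewrite -[d / e]mulrC.
have [h1 h2 h3] := h _ _ _ E'.
split => //.
- by move/eqP: h1; rewrite mulf_eq0 invr_eq0 (negPf ne) orbF => /eqP.
- by move/eqP: h3; rewrite mulf_eq0 invr_eq0 (negPf ne) orbF => /eqP.
Qed.

End FreeMore.

Section Span3.
Variable K : fieldType.
Variable V : vectType K.
Lemma memv_span3P (a b c v : V) :
  reflect (exists r0 r1 r2 : K, v = r0 *: a + r1 *: b + r2 *: c) (v \in <<[:: a; b; c]>>%VS).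
Proof.
apply: (iffP idP) => [|[r0 [r1 [r2 ->]]]]; last first.
  by rewrite !memvD ?memvZ ?memv_span ?inE ?eqxx ?orbT.
rewrite span_cons => /memv_addP [x /vlineP[r0 ->]] [y /memv_span2P[r1 [r2 ->]] ->].
by exists r0, r1, r2; rewrite addrA.
Qed.

Lemma notfree3 (a b c : V) : ~~ free [:: a; b; c] ->
  exists r0 r1 r2 : K, r0 *: a + r1 *: b + r2 *: c = 0 /\ ~ [/\ r0 = 0, r1 = 0 & r2 = 0].
Proof.
move=> nf; apply: NNPP => hn; move/negP: nf; apply; apply/free3P => r0 r1 r2 e.
by apply: NNPP => hz; apply: hn; exists r0, r1, r2.
Qed.

Lemma notfree2 (a b : V) : ~~ free [:: a; b] ->
  exists r0 r1 : K, r0 *: a + r1 *: b = 0 /\ ~ (r0 = 0 /\ r1 = 0).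
Proof.
move=> nf; apply: NNPP => hn; move/negP: nf; apply; apply/free2P => r0 r1 e.
by apply: NNPP => hz; apply: hn; exists r0, r1.
Qed.

Lemma span2_dim (a b : V) (X : seq V) : free X -> {subset X <= <<[:: a; b]>>%VS} -> (size X <= 2)%N.
Proof.
move=> /eqP fX sub; rewrite -fX.
apply: leq_trans (dim_span [:: a; b]); apply: dimvS; exact/span_subvP.
Qed.
End Span3.

Section LG.
Variable R : realType.
Local Notation H := (quat R).
Variable Y : vectType R.
Variable act : Y -> H -> Y.
Hypothesis actDl : forall p y z, act (y + z) p = act y p + act z p.
Hypothesis actZl : forall p (r : R) y, act (r *: y) p = r *: act y p.
Hypothesis actDr : forall y p q, act y (p + q) = act y p + act y q.
Hypothesis actZr : forall y (r : R) p, act y (r *: p) = r *: act y p.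
Hypothesis act1 : forall y, act y 1 = y.
Hypothesis actA : forall y p q, act (act y p) q = act y (p * q).

Lemma act0r y : act y 0 = 0.
Proof. by have := actZr y 0 0; rewrite !scale0r. Qed.
Lemma act0l p : act 0 p = 0.
Proof. by have := actZl p 0 0; rewrite !scale0r. Qed.

Lemma act_inj y p : p != 0 -> act y p = 0 -> y = 0.
Proof.
move=> hp e; rewrite -[y]act1.
have hu : p \is a GRing.unit by rewrite qunitE.
by rewrite -(mulrV hu) -actA e act0l.
Qed.

Lemma act_free4 y : y != 0 -> free [:: act y 1; act y (qI R); act y (qJ R); act y (qK R)].
Proof.
move=> ny; apply/free4P => r0 r1 r2 r3 e.
have e' : act y (r0 *: 1 + r1 *: qI R + r2 *: qJ R + r3 *: qK R) = 0 by rewrite !actDr !actZr.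
have p0 : r0 *: 1 + r1 *: qI R + r2 *: qJ R + r3 *: qK R = 0.
  by apply: NNPP => /eqP hp; move/eqP: ny; apply; exact: act_inj hp e'.
have [c0 c1 c2 c3] := comp4 p0.
by move: c0 c1 c2 c3; csimp; rewrite /qI /qJ /qK /=; split; lra.
Qed.

Definition phi (s1 s2 : H) (y : Y * Y) : Y := act y.1 s1 + act y.2 s2.

Lemma phiD s1 s2 y z : phi s1 s2 (y + z) = phi s1 s2 y + phi s1 s2 z.
Proof. by rewrite /phi /= !actDl addrACA. Qed.
Lemma phiZ s1 s2 (r : R) y : phi s1 s2 (r *: y) = r *: phi s1 s2 y.
Proof. by rewrite /phi /= !actZl scalerDr. Qed.

Lemma transfer (u0 u1 u2 y0 y1 y2 : Y * Y) s1 s2 :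
  free [:: u0; u1; u2] -> free [:: y0; y1; y2] ->
  {subset [:: y0; y1; y2] <= <<[:: u0; u1; u2]>>%VS} ->
  free [:: phi s1 s2 y0; phi s1 s2 y1; phi s1 s2 y2] ->
  free [:: phi s1 s2 u0; phi s1 s2 u1; phi s1 s2 u2].
Proof.
move=> fu fy sub fp; apply/free3P => k0 k1 k2 e.
set v := k0 *: u0 + k1 *: u1 + k2 *: u2.
have pv : phi s1 s2 v = 0 by rewrite /v !phiD !phiZ.
have eqs : (<<[:: y0; y1; y2]>> = <<[:: u0; u1; u2]>>)%VS.
  apply/eqP; rewrite eqEdim; apply/andP; split; first exact/span_subvP.
  by rewrite (eqP fy) (eqP fu).
have vin : v \in <<[:: y0; y1; y2]>>%VS.
  by rewrite eqs /v !memvD ?memvZ ?memv_span ?inE ?eqxx ?orbT.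
case/memv_span3P: vin => m0 [m1 [m2 ev]].
have : m0 *: phi s1 s2 y0 + m1 *: phi s1 s2 y1 + m2 *: phi s1 s2 y2 = 0.
  by rewrite -!phiZ -!phiD -ev.
move/free3P: fp => fp /fp [z0 z1 z2].
have : v = 0 by rewrite ev z0 z1 z2 !scale0r !addr0.
by move/free3P: fu => fu /fu.
Qed.


Lemma fstD (x y : Y * Y) : (x + y).1 = x.1 + y.1. Proof. by []. Qed.
Lemma sndD (x y : Y * Y) : (x + y).2 = x.2 + y.2. Proof. by []. Qed.
Lemma fstZ (r : R) (x : Y * Y) : (r *: x).1 = r *: x.1. Proof. by []. Qed.
Lemma sndZ (r : R) (x : Y * Y) : (r *: x).2 = r *: x.2. Proof. by []. Qed.
Lemma fst0 : (0 : Y * Y).1 = 0. Proof. by []. Qed.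
Lemma snd0 : (0 : Y * Y).2 = 0. Proof. by []. Qed.

Lemma pair_eq (x y : Y * Y) : x.1 = y.1 -> x.2 = y.2 -> x = y.
Proof. by case: x => ? ?; case: y => ? ? /= -> ->. Qed.

Lemma phi_pair s1 s2 (c d : Y) : phi s1 s2 (c, d) = act c s1 + act d s2. Proof. by []. Qed.

Lemma lemmaG (u0 u1 u2 : Y * Y) : free [:: u0; u1; u2] ->
  exists s1 s2, free [:: phi s1 s2 u0; phi s1 s2 u1; phi s1 s2 u2].
Proof.
move=> fu.
have phi01 : forall y, phi 0 1 y = y.2 by move=> y; rewrite /phi act0r act1 add0r.
have phi10 : forall y, phi 1 0 y = y.1 by move=> y; rewrite /phi act0r act1 addr0.
case: (boolP (free [:: u0.2; u1.2; u2.2])) => [f2|nf2].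
  by exists 0, 1; rewrite !phi01.
case: (boolP (free [:: u0.1; u1.1; u2.1])) => [f1|nf1].
  by exists 1, 0; rewrite !phi10.
have [r0 [r1 [r2 [er nr]]]] := notfree3 nf2.
have [t0 [t1 [t2 [et nt]]]] := notfree3 nf1.
pose ys := r0 *: u0 + r1 *: u1 + r2 *: u2.
pose yss := t0 *: u0 + t1 *: u1 + t2 *: u2.
have ys2 : ys.2 = 0 by exact: er.
have yss1 : yss.1 = 0 by exact: et.
move/free3P: (fu) => fu3.
have ysn : ys.1 != 0.
  apply/eqP => h; apply: nr; apply: fu3.
  by rewrite -/ys [ys]surjective_pairing h ys2.
have yssn : yss.2 != 0.
  apply/eqP => h; apply: nt; apply: fu3.
  by rewrite -/yss [yss]surjective_pairing h yss1.
have inU : forall k0 k1 k2 : R, k0 *: u0 + k1 *: u1 + k2 *: u2 \in <<[:: u0; u1; u2]>>%VS.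
  by move=> k0 k1 k2; rewrite !memvD ?memvZ ?memv_span ?inE ?eqxx ?orbT.
have [y [yin yU]] : exists y, y \in [:: u0; u1; u2] /\ y \notin <<[:: ys; yss]>>%VS.
  apply: NNPP => h.
  have sub : {subset [:: u0; u1; u2] <= <<[:: ys; yss]>>%VS}.
    by move=> y yin; apply: NNPP => /negP hy; apply: h; exists y.
  by have := span2_dim fu sub.
have fys : free [:: ys; yss].
  apply/free2P => k0 k1 e.
  have e1 := congr1 fst e; have e2 := congr1 snd e; rewrite fstD sndD !fstZ !sndZ fst0 snd0 ys2 yss1 !scaler0 ?addr0 ?add0r in e1 e2.
  by move/eqP: e1; move/eqP: e2; rewrite !scaler_eq0 (negPf ysn) (negPf yssn) !orbF => /eqP -> /eqP ->.
have fy3 : free [:: y; ys; yss] by rewrite free_cons yU fys.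
suff [s1 [s2 fs]] : exists s1 s2, free [:: phi s1 s2 y; phi s1 s2 ys; phi s1 s2 yss].
  exists s1, s2; apply: (transfer fu fy3 _ fs) => v.
  by rewrite !inE => /or3P [] /eqP ->; [apply: memv_span| apply: inU | apply: inU].
move: ysn yssn fys fy3; rewrite [ys]surjective_pairing [yss]surjective_pairing ys2 yss1.
move: (ys.1) (yss.2) => A B An Bn fys fy3.
move: y yin yU fy3 => [C D] _ _ fy3.
have phA : forall s1 s2, phi s1 s2 (A, 0) = act A s1 by move=> s1 s2; rewrite phi_pair act0l addr0.
have phB : forall s1 s2, phi s1 s2 (0, B) = act B s2 by move=> s1 s2; rewrite phi_pair act0l add0r.
move/free3P: (fy3) => fy.
case: (boolP (free [:: B; D])) => [fBD|nBD]; last first.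
  have [k0 [k1 [ek nk]]] := notfree2 nBD.
  have k1n : k1 != 0.
    apply/eqP => k10; apply: nk; split => //; move: ek; rewrite k10 scale0r addr0 => /eqP.
    by rewrite scaler_eq0 (negPf Bn) orbF => /eqP.
  pose rho := - (k0 / k1).
  have eD : D = rho *: B.
    apply: (scalerI k1n); rewrite scalerA /rho mulrN mulrCA mulfV // mulr1 scaleNr.
    by apply/eqP; rewrite -addr_eq0 addrC ek.
  have fAC : free [:: A; C].
    apply/free2P => a c e.
    have [h1 h2 _] : [/\ c = 0, a = 0 & - (c * rho) = 0].
      apply: fy; apply: pair_eq; rewrite ?fstD ?sndD ?fstZ ?sndZ ?fst0 ?snd0 /=.
        by rewrite scaler0 addr0 addrC.
      by rewrite scaler0 addr0 eD scalerA scaleNr addrN.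
    by [].
  have [sg [sgin sgU]] : exists sg, sg \in [:: 1; qI R; qJ R; qK R] /\ act B sg \notin <<[:: A; C]>>%VS.
    apply: NNPP => h.
    have sub : {subset [:: act B 1; act B (qI R); act B (qJ R); act B (qK R)] <= <<[:: A; C]>>%VS}.
      move=> v; rewrite !inE => /or4P [] /eqP -> ; apply: NNPP => /negP hy; apply: h.
      - by exists 1; rewrite !inE eqxx.
      - by exists (qI R); rewrite !inE eqxx ?orbT.
      - by exists (qJ R); rewrite !inE eqxx ?orbT.
      - by exists (qK R); rewrite !inE eqxx ?orbT.
    by have := span2_dim (act_free4 Bn) sub.
  exists 1, sg; rewrite phA phB phi_pair !act1 eD actZl.
  by apply: free_shear; rewrite free_cons sgU.
have [p [pin pU]] : exists p, p \in [:: 1; qI R; qJ R; qK R] /\ A \notin <<[:: act B p; act D p]>>%VS.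
  apply: NNPP => h.
  have key : forall p q : H, p * q = 1 -> A \in <<[:: act B p; act D p]>>%VS -> act A q \in <<[:: B; D]>>%VS.
    move=> p q pq /memv_span2P [a [b ->]]; apply/memv_span2P; exists a, b.
    by rewrite actDl !actZl !actA pq !act1.
  have hin : forall p q : H, p \in [:: 1; qI R; qJ R; qK R] -> p * q = 1 -> act A q \in <<[:: B; D]>>%VS.
    move=> p0 q hp pq; apply: (key _ _ pq); apply: NNPP => /negP hn; apply: h; by exists p0.
  have hneg : forall q, act A (- q) \in <<[:: B; D]>>%VS -> act A q \in <<[:: B; D]>>%VS.
    move=> q; rewrite -scaleN1r actZr => /(memvZ (-1)); by rewrite scalerA mulrNN mulr1 scale1r.
  have sub : {subset [:: act A 1; act A (qI R); act A (qJ R); act A (qK R)] <= <<[:: B; D]>>%VS}.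
    move=> v; rewrite !inE => /or4P [] /eqP ->.
    - by apply: (hin 1); rewrite ?inE ?eqxx ?mulr1.
    - apply: hneg; apply: (hin (qI R)); first by rewrite !inE eqxx ?orbT.
      by apply: quat_eq; csimp; rewrite /qI /=; ring.
    - apply: hneg; apply: (hin (qJ R)); first by rewrite !inE eqxx ?orbT.
      by apply: quat_eq; csimp; rewrite /qJ /=; ring.
    - apply: hneg; apply: (hin (qK R)); first by rewrite !inE eqxx ?orbT.
      by apply: quat_eq; csimp; rewrite /qK /=; ring.
  by have := span2_dim (act_free4 An) sub.
have pn : p != 0.
  move: pin; rewrite !inE => /or4P [] /eqP -> ; apply/eqP.
  - by move/(congr1 (@q0 R)); rewrite cO0 cZ0 => /eqP; rewrite oner_eq0.
  - by move/(congr1 (@q1 R)); rewrite cZ1 /qI /= => /eqP; rewrite oner_eq0.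
  - by move/(congr1 (@q2 R)); rewrite cZ2 /qJ /= => /eqP; rewrite oner_eq0.
  - by move/(congr1 (@q3 R)); rewrite cZ3 /qK /= => /eqP; rewrite oner_eq0.
have fBDp : free [:: act B p; act D p].
  apply/free2P => a b e; move/free2P: fBD; apply; apply: (act_inj pn).
  by rewrite actDl !actZl.
have f3 : free [:: A; act B p; act D p] by rewrite free_cons pU fBDp.
have f2 : free [:: A; act B p] := free3_12 f3.
have [e [en ef]] : exists e : R, e != 0 /\ free [:: act D p + e *: C; A; act B p].
  apply: NNPP => hn.
  have inW : forall e : R, e != 0 -> act D p + e *: C \in <<[:: A; act B p]>>%VS.
    move=> e en; have nf : ~~ free [:: act D p + e *: C; A; act B p].
      by apply/negP => fe; apply: hn; exists e.
    have [k0 [k1 [k2 [ek nk]]]] := notfree3 nf.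
    have k0n : k0 != 0.
      apply/eqP => k00; apply: nk; move: ek; rewrite k00 scale0r add0r => ek.
      by move/free2P: f2 => /(_ _ _ ek) [-> ->].
    apply/memv_span2P; exists (- (k1 / k0)), (- (k2 / k0)).
    apply: (scalerI k0n); rewrite [RHS]scalerDr !scalerA !mulrN !(mulrC k0) !divfK //.
    apply/eqP; rewrite -subr_eq0 !scaleNr opprD !opprK addrA; apply/eqP; exact: ek.
  have i1 := inW 1 (oner_neq0 _).
  have i2 : act D p + 2 *: C \in <<[:: A; act B p]>>%VS.
    by apply: inW; rewrite pnatr_eq0.
  have iD : act D p \in <<[:: A; act B p]>>%VS.
    have -> : act D p = 2 *: (act D p + 1 *: C) - (act D p + 2 *: C).
      rewrite scale1r scalerDr opprD addrACA subrr addr0 -{3}(scale1r (act D p)) -scalerBl.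
      have -> : (2 - 1 : R) = 1 by lra.
      by rewrite scale1r.
    by rewrite memvB ?memvZ.
  case/memv_span2P: iD => m0 [m1 em].
  move/free3P: f3 => /(_ m0 m1 (-1)).
  rewrite -em scaleN1r subrr => /(_ erefl) [_ _ /eqP].
  by rewrite oppr_eq0 oner_eq0.
exists 1, (e^-1 *: p).
rewrite phA phB phi_pair !act1 !actZr.
exact: free_lt en ef.
Qed.


End LG.

Section Final.
Variable R : realType.
Local Notation H := (quat R).
Local Notation M2 := 'M[H]_2.

Lemma free_map3 (V W : vectType R) (f : V -> W) :
  (forall x y, f (x + y) = f x + f y) -> (forall (r : R) x, f (r *: x) = r *: f x) ->
  (forall x, f x = 0 -> x = 0) ->
  forall a b c, free [:: a; b; c] -> free [:: f a; f b; f c].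
Proof.
move=> fD fZ f0 a b c /free3P h; apply/free3P => r0 r1 r2 e.
by apply: h; apply: f0; rewrite !fD !fZ.
Qed.

Definition qc (x : H) : H := Quat (q0 x) (- q1 x) (- q2 x) (- q3 x).
Lemma cC0 x : q0 (qc x) = q0 x. Proof. by []. Qed.
Lemma cC1 x : q1 (qc x) = - q1 x. Proof. by []. Qed.
Lemma cC2 x : q2 (qc x) = - q2 x. Proof. by []. Qed.
Lemma cC3 x : q3 (qc x) = - q3 x. Proof. by []. Qed.
Ltac csimp2 := rewrite ?cC0 ?cC1 ?cC2 ?cC3; csimp; rewrite ?cC0 ?cC1 ?cC2 ?cC3.
Lemma qcD x y : qc (x + y) = qc x + qc y. Proof. by apply: quat_eq; csimp2; ring. Qed.
Lemma qcZ (r : R) x : qc (r *: x) = r *: qc x. Proof. by apply: quat_eq; csimp2; ring. Qed.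
Lemma qcK x : qc (qc x) = x. Proof. by apply: quat_eq; csimp2; ring. Qed.
Lemma qc0 x : qc x = 0 -> x = 0. Proof. by move=> h; rewrite -[x]qcK h; apply: quat_eq; csimp2; ring. Qed.

Definition pc (x : H * H) : H * H := (qc x.1, qc x.2).

Definition actP (y : H * H) (p : H) : H * H := (y.1 * p, y.2 * p).
Definition actH (y : H) (p : H) : H := y * p.

Definition uM (M : 'I_3 -> M2) (a : 'I_3) : (H * H) * (H * H) :=
  ((M a 0 0, M a 1 0), (M a 0 1, M a 1 1)).

Lemma pair_eq2 (x y : H * H) : x.1 = y.1 -> x.2 = y.2 -> x = y.
Proof. by case: x => ? ?; case: y => ? ? /= -> ->. Qed.

Lemma aP1 p (y z : H * H) : actP (y + z) p = actP y p + actP z p.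
Proof. by apply: pair_eq2; rewrite /= mulrDl. Qed.
Lemma aP2 p (r : R) (y : H * H) : actP (r *: y) p = r *: actP y p.
Proof. by apply: pair_eq2; rewrite /= -scalerAl. Qed.
Lemma aP3 (y : H * H) p q : actP y (p + q) = actP y p + actP y q.
Proof. by apply: pair_eq2; rewrite /= mulrDr. Qed.
Lemma aP4 (y : H * H) (r : R) p : actP y (r *: p) = r *: actP y p.
Proof. by apply: pair_eq2; rewrite /= qscaleAr. Qed.
Lemma aP5 (y : H * H) : actP y 1 = y.
Proof. by apply: pair_eq2; rewrite /= mulr1. Qed.
Lemma aP6 (y : H * H) p q : actP (actP y p) q = actP y (p * q).
Proof. by apply: pair_eq2; rewrite /= mulrA. Qed.
Lemma aH1 p (y z : H) : actH (y + z) p = actH y p + actH z p. Proof. exact: mulrDl. Qed.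
Lemma aH2 p (r : R) (y : H) : actH (r *: y) p = r *: actH y p. Proof. by rewrite /actH -scalerAl. Qed.
Lemma aH3 (y : H) p q : actH y (p + q) = actH y p + actH y q. Proof. exact: mulrDr. Qed.
Lemma aH4 (y : H) (r : R) p : actH y (r *: p) = r *: actH y p. Proof. by rewrite /actH qscaleAr. Qed.
Lemma aH5 (y : H) : actH y 1 = y. Proof. exact: mulr1. Qed.
Lemma aH6 (y : H) p q : actH (actH y p) q = actH y (p * q). Proof. by rewrite /actH mulrA. Qed.

Lemma lemmaE (M : 'I_3 -> M2) : free [:: uM M 0; uM M 1; uM M 2] ->
  exists X X' Z Z' : M2, [/\ X' *m X = 1, Z *m Z' = 1 &
    free [:: (X *m M 0 *m Z) 0 0; (X *m M 1 *m Z) 0 0; (X *m M 2 *m Z) 0 0]].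
Proof.
move=> fu.
have [s1 [s2 fA]] := @lemmaG R _ actP aP1 aP2 aP3 aP4 aP5 aP6 _ _ _ fu.
set v := fun a => phi actP s1 s2 (uM M a).
have fpc : free [:: pc (v 0); pc (v 1); pc (v 2)].
  apply: free_map3 => //.
  - by move=> x y; apply: pair_eq2; rewrite /= qcD.
  - by move=> r x; apply: pair_eq2; rewrite /= qcZ.
  - by move=> [x y] /= h; have h1 := congr1 fst h; have h2 := congr1 snd h; rewrite /= in h1 h2; rewrite (qc0 h1) (qc0 h2).
have [t1 [t2 fB]] := @lemmaG R _ actH aH1 aH2 aH3 aH4 aH5 aH6 _ _ _ fpc.
have key : forall (X Z : M2) a, X 0 0 = qc t1 -> X 0 1 = qc t2 -> Z 0 0 = s1 -> Z 1 0 = s2 ->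
    (X *m M a *m Z) 0 0 = qc (phi actH t1 t2 (pc (v a))).
  move=> X Z a h1 h2 h3 h4; rewrite mul3E h1 h2 h3 h4 /phi /actH /pc /v /phi /actP /uM /=.
  by apply: quat_eq; csimp2; ring.
have fC : free [:: qc (phi actH t1 t2 (pc (v 0))); qc (phi actH t1 t2 (pc (v 1))); qc (phi actH t1 t2 (pc (v 2)))].
  apply: free_map3 fB.
  - exact: qcD.
  - exact: qcZ.
  - exact: qc0.
have nx : (qc t1, qc t2) != 0.
  apply/eqP => h; have h1 := congr1 fst h; have h2 := congr1 snd h; rewrite /= in h1 h2.
  move: fB; rewrite /phi /actH (qc0 h1) (qc0 h2) !mulr0 addr0 => /free_not0.
  by move/(_ 0 (mem_head _ _)); rewrite eqxx.
have nw : (s1, s2) != 0.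
  apply/eqP => h; have h1 := congr1 fst h; have h2 := congr1 snd h; rewrite /= in h1 h2.
  have := free_not0 fA (mem_head _ _); rewrite /phi /actP h1 h2 => /eqP; apply.
  by apply: pair_eq2; rewrite /= !mulr0 addr0.
have [X [X' [hX hX0 hX1]]] := frame_row0 nx.
have [Z [Z' [hZ hZ0 hZ1]]] := frame_col0 nw.
exists X, X', Z, Z'; split => //.
by rewrite !key.
Qed.

End Final.

Section Dec2S.
Variable R : realType.
Local Notation H := (quat R).
Local Notation M2 := 'M[H]_2.

Ltac mxs := rewrite ?(mulmx2E, mx2E00, mx2E01, mx2E10, mx2E11, id00, id01, id10, id11,
   mul1r, mulr1, mul0r, mulr0, addr0, add0r, mulNr, mulrN, subrr, addNr).

Lemma Dec_eq (M M' : 'I_3 -> M2) : (forall j, M j = M' j) -> Dec M' -> Dec M.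
Proof. by move=> e [a [c [q h]]]; exists a, c, q => j i k; rewrite e h. Qed.

Lemma Dec2_piv00 (A B : M2) : A 0 0 != 0 -> Dec (sel3 A B 0).
Proof.
move=> hA; rewrite -qunitE in hA; set a := A 0 0 in hA *.
apply: (@Dec_via _ _ (mx2 1 0 (- (A 1 0 * a^-1)) 1) (mx2 1 0 (A 1 0 * a^-1) 1)
                     (mx2 1 (- (a^-1 * A 0 1)) 0 1) (mx2 1 (a^-1 * A 0 1) 0 1)).
- by apply: matrix2P; mxs; rewrite ?addNr ?addrN.
- by apply: matrix2P; mxs; rewrite ?addNr ?addrN.
apply: Dec_diag2 => /=; rewrite ?sel3_0 ?sel3_2.
- by rewrite mul3E; mxs; rewrite mulrA /a mulrV // mul1r addNr.
- by rewrite mul3E; mxs; rewrite -mulrA /a mulVr // mulr1 addNr.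
- by move=> i k; rewrite mulmx0 mul0mx mxE.
Qed.

Definition swp : M2 := mx2 0 1 1 0.
Lemma swpK : swp *m swp = 1. Proof. by apply: matrix2P; rewrite /swp; mxs. Qed.

Lemma Dec2_piv (A B : M2) : A != 0 -> Dec (sel3 A B 0).
Proof.
move=> nA.
have [r [s hrs]] : exists r s, A r s != 0.
  apply: NNPP => h; move/eqP: nA; apply; apply/matrixP => i k; rewrite mxE.
  by apply: NNPP => /eqP hik; apply: h; exists i, k.
pose P : M2 := if r == 0 then 1 else swp.
pose Q : M2 := if s == 0 then 1 else swp.
have PP : P *m P = 1 by rewrite /P; case: ifP => _; rewrite ?mulmx1 ?swpK.
have QQ : Q *m Q = 1 by rewrite /Q; case: ifP => _; rewrite ?mulmx1 ?swpK.
apply: (Dec_via PP QQ).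
apply: (@Dec_eq _ (sel3 (P *m A *m Q) (P *m B *m Q) 0)).
  by move=> j; case: (ord3P j) => ->; rewrite /= ?sel3_0 ?sel3_1 ?sel3_2 ?mulmx0 ?mul0mx.
apply: Dec2_piv00.
rewrite mul3E /P /Q.
by case: (ord2P r) hrs => ->; case: (ord2P s) => -> /=; rewrite /swp; mxs.
Qed.

Lemma Dec2 (A B : M2) : Dec (sel3 A B 0).
Proof.
case: (eqVneq A 0) => [-> | nA]; last exact: Dec2_piv.
case: (eqVneq B 0) => [-> | nB].
  exists (fun _ _ => 0), (fun _ _ => 0), (fun _ _ => 0) => j i k.
  rewrite sum3 !mul0r !addr0.
  by case: (ord3P j) => ->; rewrite ?sel3_0 ?sel3_1 ?sel3_2 mxE.
apply: (@Dec_eq _ (sel3 B 0 0 \o sel3 1 0 2)).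
  by move=> j; case: (ord3P j) => ->.
apply: Dec_perm; exact: Dec2_piv.
Qed.

Lemma Dec_rel (M : 'I_3 -> M2) (r0 r1 r2 : R) : r2 != 0 ->
  (forall i k, r0 *: M 0 i k + r1 *: M 1 i k + r2 *: M 2 i k = 0) -> Dec M.
Proof.
move=> n2 rel.
have hM2 : forall i k, M 2 i k = (- (r0 / r2)) *: M 0 i k + (- (r1 / r2)) *: M 1 i k.
  move=> i k; apply: (scalerI n2); rewrite scalerDr !scalerA !mulrN !(mulrC r2) !divfK //.
  apply/eqP; rewrite -subr_eq0 !scaleNr opprD !opprK addrC ?addrA; apply/eqP; exact: rel.
have [a [c [q h]]] := Dec2 (M 0) (M 1).
exists a, c, (fun l j => if j == 2 then (- (r0 / r2)) *: q l 0 + (- (r1 / r2)) *: q l 1 else q l j).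
move=> j i k; case: (ord3P j) => -> /=.
- by rewrite (h 0 i k).
- by rewrite (h 1 i k).
rewrite hM2 (h 0 i k) (h 1 i k) !sum3.
set e0 := - (r0 / r2); set e1 := - (r1 / r2).
by apply: quat_eq; csimp; ring.
Qed.

Lemma rel_entries (M : 'I_3 -> M2) (r0 r1 r2 : R) :
  r0 *: uM M 0 + r1 *: uM M 1 + r2 *: uM M 2 = 0 ->
  forall i k, r0 *: M 0 i k + r1 *: M 1 i k + r2 *: M 2 i k = 0.
Proof.
move=> e i k.
have e1 := congr1 fst e; have e2 := congr1 snd e.
have e11 := congr1 fst e1; have e12 := congr1 snd e1.
have e21 := congr1 fst e2; have e22 := congr1 snd e2.
by case: (ord2P i) => ->; case: (ord2P k) => ->.
Qed.

Lemma decM (M : 'I_3 -> M2) : Dec M.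
Proof.
case: (boolP (free [:: uM M 0; uM M 1; uM M 2])) => [fu|nfu].
  have [X [X' [Z [Z' [hX hZ f]]]]] := lemmaE fu.
  by apply: (Dec_via hX hZ); apply: ML.
have [r0 [r1 [r2 [er nr]]]] := notfree3 nfu.
have rel := rel_entries er.
case: (eqVneq r2 0) => [z2|n2]; last exact: Dec_rel n2 rel.
case: (eqVneq r1 0) => [z1|n1].
  have n0 : r0 != 0 by apply/eqP => z0; apply: nr.
  apply: (@Dec_eq _ ((M \o sel3 2 1 0) \o sel3 2 1 0)); first by move=> j; case: (ord3P j) => ->.
  apply: Dec_perm; apply: (@Dec_rel _ r2 r1 r0 n0) => i k /=.
  by rewrite -(rel i k) addrC [r2 *: _ + _]addrC addrA.
apply: (@Dec_eq _ ((M \o sel3 0 2 1) \o sel3 0 2 1)); first by move=> j; case: (ord3P j) => ->.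
apply: Dec_perm; apply: (@Dec_rel _ r0 r2 r1 n1) => i k /=.
by rewrite -(rel i k) -addrA [r2 *: _ + _]addrC addrA.
Qed.

End Dec2S.

Section Assembly.
Variable R : realType.
Local Notation H := (quat R).
Local Notation qt := (qtensor R 2 3 2).

Definition consS m (U : qt) (S' : 'I_m -> qt) : 'I_m.+1 -> qt :=
  fun l => if unlift ord0 l is Some l' then S' l' else U.

Lemma foldr_consS m (U : qt) (S' : 'I_m -> qt) :
  foldr (fun l acc => tadd (consS U S' l) acc) (@tzero R 2 3 2) (enum 'I_m.+1) =
  tadd U (foldr (fun l acc => tadd (S' l) acc) (@tzero R 2 3 2) (enum 'I_m)).
Proof.
rewrite enum_ordSl /= /consS unlift_none foldr_map.
congr (tadd U _); elim: (enum 'I_m) => //= l s ->.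
by rewrite liftK.
Qed.

Lemma tadd0 (T : qt) : tadd (@tzero R 2 3 2) T = T.
Proof.
apply: functional_extensionality_dep => i; apply: functional_extensionality_dep => j.
apply: functional_extensionality_dep => k.
by rewrite /tadd /tzero; apply: quat_eq => /=; rewrite add0r.
Qed.

Lemma sum_rank (s : seq qt) (T : qt) :
  (forall U, List.In U s -> exists a b c, U = outer3 a b c) ->
  T = foldr (@tadd R 2 3 2) (@tzero R 2 3 2) s -> qtensor_rank_le T (size s).
Proof.
elim: s T => [|U s IH] T hs hT.
  exists 0%N; split => //; exists (fun l : 'I_0 => @tzero R 2 3 2); split; first by case.
  by rewrite hT enum_ord0.
have [m [hm [S' [hS' eS']]]] := IH _ (fun V hV => hs V (or_intror hV)) erefl.
case: (classic (U = @tzero R 2 3 2)) => [U0|U0].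
  exists m; split; first by rewrite /= ltnW // ltnS.
  exists S'; split => //; rewrite hT /= U0 tadd0; exact: eS'.
exists m.+1; split; first by [].
exists (consS U S'); split.
  move=> l; rewrite /consS; case: (unlift ord0 l) => [l'|]; first exact: hS'.
  by split => //; exact: hs U (or_introl erefl).
by rewrite foldr_consS hT /= -eS'.
Qed.

Theorem main_rank (T : qt) : qtensor_rank_le T 3.
Proof.
pose M : 'I_3 -> 'M[H]_2 := fun j => \matrix_(i, k) T i j k.
have [a [c [q h]]] := decM M.
pose U l : qt := outer3 (a l) (q l) (c l).
apply: (@sum_rank [:: U 0; U 1; U 2]).
  move=> V; rewrite /= => [[<-|[<-|[<-|[]]]]]; by eexists _, _, _.
apply: functional_extensionality_dep => i; apply: functional_extensionality_dep => j.
apply: functional_extensionality_dep => k.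
have := h j i k; rewrite /M mxE sum3 => ->.
rewrite /= /tadd /tzero /U /outer3.
by rewrite -!mulqE -!addqE -zeroqE addr0 addrA.
Qed.

End Assembly.

Theorem mainTheorem9 (R : realType) (T : qtensor R 2 3 2) :
  qtensor_rank_le T 3.
Proof. exact: main_rank. Qed.
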